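(* Let $k\geq 1$ and $\Sigma=\{a_1,\dots,a_{k+1}\}$. Let $L\subseteq(\Sigma\times D)^*$ be the set of data words $w$ such that (i) for every $j\in\{1,\dots,k+1\}$, the data values occurring in $w$ together with attribute $a_j$ are pairwise distinct (no data value occurs twice with attribute $a_j$), and (ii) the projection of $w$ onto $\Sigma$ belongs to $a_1^*a_2^*\cdots a_{k+1}^*$. Then no SAFA $M=(Q,\Sigma\times D,q_0,F,H,\delta)$ with $|H|=k$ accepts $L$.
   Context: $D$ is a fixed countably infinite set of data values; a data word over $\Sigma$ is an element of $(\Sigma\times D)^*$, and its projection onto $\Sigma$ is the word of attributes. A set augmented finite automaton (SAFA) is a tuple $M=(Q,\Sigma\times D,q_0,F,H,\delta)$: $Q$ finite set of states, $q_0\in Q$ initial, $F\subseteq Q$ final, $H=\{h_1,\dots,h_m\}$ a finite collection of (names of) sets of data values, $\delta\subseteq Q\times\Sigma\times C\times OP\times Q$ with $C=\{p(h_i),\,!p(h_i): h_i\in H\}$, $OP=\{-\}\cup\{\mathsf{ins}(h_i):h_i\in H\}$. Configurations are $(q,\langle S_1,\dots,S_m\rangle)$ with $S_i\subseteq D$ finite; initially state $q_0$ and all sets empty. On reading $(a,d)$, a transition $(q,a,\alpha,op,q')$ from the current state may be taken if $\alpha=p(h_i)$ and $d\in S_i$, or $\alpha=\,!p(h_i)$ and $d\notin S_i$; then the state becomes $q'$ and if $op=\mathsf{ins}(h_j)$ the value $d$ is added to $S_j$ ($op=-$ changes nothing). A word is accepted if some run reads it entirely and ends in $F$. *)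

(* Defs.v *)
From mathcomp Require Import all_boot.
Unset Printing Implicit Defensive.

(* Data values: the fixed countably infinite set D is taken to be nat. *)
Definition data := nat.

(* Alphabet Sigma = {a_1,...,a_n} is 'I_n (a_j is the ordinal j-1).
   H = {h_1,...,h_m} is indexed by 'I_m. *)

Inductive cond (m : nat) : Type :=
  | InSet of 'I_m
  | NotInSet of 'I_m.

(* Operations OP = { - } U { ins(h_j) } : None is "-", Some j is ins(h_j). *)
Definition op (m : nat) := option 'I_m.

(* A SAFA over alphabet 'I_n x D with m sets. delta is a (finite, since all its
   components range over finite types) relation Q x Sigma x C x OP x Q. *)
Record safa (n m : nat) := Safa {
  state : finType;
  q0 : state;
  final : pred state;
  delta : state -> 'I_n -> cond m -> op m -> state -> bool
}.
Arguments state {n m}.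
Arguments q0 {n m}.
Arguments final {n m}.
Arguments delta {n m}.
Arguments InSet {m}.
Arguments NotInSet {m}.

(* Contents of the m sets: S_i is the finite set of elements of the seq. *)
Definition sets (m : nat) := 'I_m -> seq data.

Definition empty_sets {m : nat} : sets m := fun _ => [::].

Definition cond_holds {m : nat} (S : sets m) (c : cond m) (d : data) : bool :=
  match c with
  | InSet i => d \in S i
  | NotInSet i => d \notin S i
  end.

Definition apply_op {m : nat} (S : sets m) (o : op m) (d : data) : sets m :=
  match o with
  | None => S
  | Some j => fun i => if i == j then d :: S i else S i
  end.

Inductive run {n m : nat} (M : safa n m) :
  state M -> sets m -> seq ('I_n * data) -> state M -> sets m -> Prop :=
  | run_nil q S : run M q S [::] q S
  | run_cons q S a d w c o q1 q' S' :
      delta M q a c o q1 ->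
      cond_holds S c d ->
      run M q1 (apply_op S o d) w q' S' ->
      run M q S ((a, d) :: w) q' S'.


Definition accepts {n m : nat} (M : safa n m) (w : seq ('I_n * data)) : Prop :=
  exists q S, run M (q0 M) empty_sets w q S /\ final M q.

Definition inL {k : nat} (w : seq ('I_k.+1 * data)) : Prop :=
  (forall j : 'I_k.+1, uniq [seq x.2 | x <- w & x.1 == j]) /\
  (* (ii) projection onto Sigma lies in a_1^* a_2^* ... a_{k+1}^* *)
  (exists e : 'I_k.+1 -> nat,
      [seq x.1 | x <- w] = flatten [seq nseq (e j) j | j <- enum 'I_k.+1]).

(* Main.v *)
Require Import Defs.
From mathcomp Require Import all_boot zify.

Definition memS {m : nat} (D : nat -> data) (S : sets m) (O : nat -> op m)
  (s t : nat) (i : 'I_m) (v : data) : bool :=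
  (v \in S i) || has (fun u => (D u == v) && (O u == Some i)) (iota s (t - s)).

Definition chkS {m : nat} (D : nat -> data) (S : sets m) (C : nat -> cond m)
  (O : nat -> op m) (s t : nat) : bool :=
  match C t with
  | InSet i => memS D S O s t i (D t)
  | NotInSet i => ~~ memS D S O s t i (D t)
  end.

Lemma memS_step {m : nat} D (S : sets m) O O' s t i v :
  s < t -> (forall u, s < u < t -> O u = O' u) ->
  memS D S O s t i v = memS D (apply_op S (O s) (D s)) O' s.+1 t i v.
Proof.
move=> st hO; rewrite /memS.
have -> : t - s = (t - s.+1).+1 by lia.
rewrite /= orbA; congr (_ || _).
  case: (O s) => [j|] /=; last by rewrite andbF orbF.
  case: (i =P j) => [->|ne].
    by rewrite eqxx in_cons andbT orbC eq_sym.
  have -> : (Some j == Some i) = false by apply/eqP => -[] /esym.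
  by rewrite andbF orbF.
apply: eq_in_has => u; rewrite mem_iota => /andP[h1 h2].
by rewrite hO //; apply/andP; split; lia.
Qed.

Lemma chkS_step {m : nat} D (S : sets m) C O s t :
  s < t -> chkS D S C O s t = chkS D (apply_op S (O s) (D s)) C O s.+1 t.
Proof.
by move=> st; rewrite /chkS; case: (C t) => i; rewrite (memS_step _ _ _ O) .
Qed.

Lemma gen {n m : nat} (M : safa n m) (A : nat -> 'I_n) (D : nat -> data) (c0 : cond m) :
  forall N s q q' (S : sets m),
  (exists S', run M q S [seq (A t, D t) | t <- iota s N] q' S') <->
  exists (C : nat -> cond m) (O : nat -> op m) (Q : nat -> state M),
    [/\ Q s = q, Q (s + N) = q',
       (forall t, s <= t < s + N -> delta M (Q t) (A t) (C t) (O t) (Q t.+1)) &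
       (forall t, s <= t < s + N -> chkS D S C O s t)].
Proof.
elim=> [|N IH] s q q' S.
  split.
    move=> [S' H]; inversion H; subst.
    exists (fun _ => c0), (fun _ => None), (fun _ => q'); split => // t; lia.
  move=> [C [O [Q [<- h2 _ _]]]]; rewrite addn0 in h2; rewrite -h2.
  exists S; exact: run_nil.
split.
  move=> [S' H] /=; inversion H; subst.
  have [C [O [Q [e1 e2 hd hc]]]] : exists (C : nat -> cond m) (O : nat -> op m) (Q : nat -> state M),
    [/\ Q s.+1 = q1, Q (s.+1 + N) = q',
       (forall t, s.+1 <= t < s.+1 + N -> delta M (Q t) (A t) (C t) (O t) (Q t.+1)) &
       (forall t, s.+1 <= t < s.+1 + N -> chkS D (apply_op S o (D s)) C O s.+1 t)].
    by apply/IH; exists S'.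
  exists (fun t => if t == s then c else C t), (fun t => if t == s then o else O t),
    (fun t => if t == s then q else Q t).
  split.
  - by rewrite eqxx.
  - have -> : (s + N.+1 == s) = false by lia.
    by rewrite addSnnS in e2 *.
  - move=> t ht; case: (t =P s) => [->|ne].
      have -> : (s.+1 == s) = false by lia.
      by rewrite e1.
    have -> : (t.+1 == s) = false by lia.
    apply: hd; lia.
  - move=> t ht; case: (t =P s) => [->|ne].
      rewrite /chkS eqxx /memS subnn /=.
      by move: H8; case: (c) => i /=; rewrite orbF.
    have st : s < t by lia.
    rewrite (chkS_step _ _ _ _ _ _ st) eqxx.
    rewrite /chkS; move: (hc t ltac:(lia)); rewrite /chkS.
    have -> : (t == s) = false by apply/eqP.
    rewrite /memS.
    have E : forall i v, has (fun u => (D u == v) && ((if u == s then o else O u) == Some i))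
         (iota s.+1 (t - s.+1)) = has (fun u => (D u == v) && (O u == Some i)) (iota s.+1 (t - s.+1)).
      move=> i v; apply: eq_in_has => u; rewrite mem_iota => hu.
      by have -> : (u == s) = false by lia.
    by case: (C t) => i; rewrite E.
move=> [C [O [Q [e1 e2 hd hc]]]].
have [S' H] : exists S', run M (Q s.+1) (apply_op S (O s) (D s))
                [seq (A t, D t) | t <- iota s.+1 N] q' S'.
  apply/IH; exists C, O, Q; split => //.
  - by have -> : s.+1 + N = s + N.+1 by lia.
  - move=> t ht; apply: hd; lia.
  - move=> t ht; rewrite -chkS_step; [apply: hc|]; lia.
exists S'; apply: (@run_cons _ _ M _ _ _ _ _ (C s) (O s)).
- rewrite -e1; apply: hd; lia.
- move: (hc s ltac:(lia)); rewrite /chkS /memS subnn /=.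
  by case: (C s) => i /=; rewrite orbF.
- exact: H.
Qed.

Definition word {n : nat} (A : nat -> 'I_n) (D : nat -> data) N :=
  mkseq (fun t => (A t, D t)) N.

Definition chk0 {m : nat} D (C : nat -> cond m) O t := chkS D empty_sets C O 0 t.

Definition valid {n m : nat} (M : safa n m) A D N C O Q :=
  [/\ Q 0 = q0 M, final M (Q N),
     (forall t, t < N -> delta M (Q t) (A t) (C t) (O t) (Q t.+1)) &
     (forall t, t < N -> chk0 D C O t)].

Lemma acc_valid {n m : nat} (M : safa n m) (c0 : cond m) A D N :
  accepts M (word A D N) -> exists C O Q, valid M A D N C O Q.
Proof.
move=> [q [S [H hf]]].
have [C [O [Q [e1 e2 hd hc]]]] := (proj1 (gen M A D c0 N 0 (q0 M) q empty_sets)) (ex_intro _ S H).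
exists C, O, Q; split => //; first by rewrite -e2 in hf.
Qed.

Lemma valid_acc {n m : nat} (M : safa n m) (c0 : cond m) A D N C O Q :
  valid M A D N C O Q -> accepts M (word A D N).
Proof.
move=> [e1 hf hd hc].
have [S H] : exists S, run M (q0 M) empty_sets [seq (A t, D t) | t <- iota 0 N] (Q N) S.
  by apply/(gen M A D c0 N 0 (q0 M) (Q N) empty_sets); exists C, O, Q; split.
by exists (Q N), S.
Qed.

Lemma memP {m : nat} D (O : nat -> op m) t i v :
  reflect (exists2 u, u < t & D u = v /\ O u = Some i)
          (memS D empty_sets O 0 t i v).
Proof.
rewrite /memS /= subn0; apply: (iffP hasP).
  by move=> [u]; rewrite mem_iota => /andP[_ hu] /andP[/eqP h1 /eqP h2]; exists u.
move=> [u hu [h1 h2]]; exists u; first by rewrite mem_iota.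
by rewrite h1 h2 !eqxx.
Qed.

Lemma patt {m : nat} D D' (C : nat -> cond m) O t :
  D' t = D t -> (forall u, u < t -> D' u <> D u -> D' u <> D t /\ D u <> D t) ->
  chk0 D' C O t = chk0 D C O t.
Proof.
move=> e h.
have E : forall i, memS D' empty_sets O 0 t i (D' t) = memS D empty_sets O 0 t i (D t).
  move=> i; rewrite e /memS /= subn0; apply: eq_in_has => u. rewrite mem_iota => hu0; have hu : u < t by lia.
  case: (D' u =P D u) => [->//|ne].
  have [h1 h2] := h u hu ne.
  have -> : (D' u == D t) = false by apply/eqP.
  by have -> : (D u == D t) = false by apply/eqP.
rewrite /chk0 /chkS; by case: (C t) => i; rewrite E.
Qed.

Lemma uniq_map_inj (T1 T2 : eqType) (f : T1 -> T2) s x y :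
  uniq (map f s) -> x \in s -> y \in s -> f x = f y -> x = y.
Proof.
elim: s => [//|a s IH] /= /andP[na us].
rewrite !in_cons => /orP[/eqP->|xs] /orP[/eqP->|ys] e //.
- by move: na; rewrite e map_f.
- by move: na; rewrite -e map_f.
- exact: IH.
Qed.

Lemma bad_word {k : nat} (A : nat -> 'I_k.+1) D N t1 t2 :
  t1 < t2 < N -> A t1 = A t2 -> D t1 = D t2 -> ~ inL (word A D N).
Proof.
move=> /andP[h12 h2] eA eD [hu _].
move: (hu (A t1)).
rewrite /word /mkseq filter_map -map_comp.
move/uniq_map_inj => /(_ t1 t2).
have H : forall t, t < N -> A t = A t1 -> t \in [seq x <- iota 0 N | preim (fun t => (A t, D t)) (fun x => x.1 == A t1) x].
  by move=> t ht e; rewrite mem_filter /= e eqxx mem_iota.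
move=> /(_ (H t1 ltac:(lia) erefl) (H t2 h2 (esym eA)) eD) e; lia.
Qed.

Section Core.
Variables (k : nat) (M : safa k.+1 k) (c0 : cond k) (N : nat)
  (A : nat -> 'I_k.+1) (D : nat -> data)
  (C : nat -> cond k) (O : nat -> op k) (Q : nat -> state M).
Hypothesis V : valid M A D N C O Q.
Hypothesis Hyp : forall D', accepts M (word A D' N) -> inL (word A D' N).

Lemma Vchk t : t < N -> chk0 D C O t.
Proof. by case: V => _ _ _; apply. Qed.

Lemma kill D' t1 t2 : t1 < t2 < N -> A t1 = A t2 -> D' t1 = D' t2 ->
  (forall t, t < N -> chk0 D' C O t) -> False.
Proof.
move=> h12 eA eD hc; have := @bad_word k A D' N t1 t2 h12 eA eD; apply; apply: Hyp.
apply: (@valid_acc _ _ M c0 A D' N C O Q).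
by case: V => *; split.
Qed.

Lemma fresh_not_in i' x : i' < N -> (forall u, u < N -> D u = D i' -> u = i') ->
  C i' = InSet x -> False.
Proof.
move=> hi hu E; have := Vchk _ hi; rewrite /chk0 /chkS E.
move/memP => [u hu' [h1 _]]; have := hu u ltac:(lia) h1; lia.
Qed.

Lemma ins i i' : i < i' < N -> A i = A i' ->
  (forall u, u < N -> D u = D i -> u = i) ->
  (forall u, u < N -> D u = D i' -> u = i') ->
  exists h, O i = Some h /\ C i' = NotInSet h.
Proof.
move=> hii eA ui ui'.
case E: (C i') => [x|x]; first by case: (fresh_not_in i' x) => //; lia.
exists x; split => //.
case: (O i =P Some x) => // ne; exfalso.
pose D' u := if u == i' then D i else D u.
apply: (kill D' i i' hii eA); first by rewrite /D' eqxx; have -> : (i == i') = false by lia.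
move=> t ht; case: (t =P i') => [->|nt].
  rewrite /chk0 /chkS E /D' eqxx; apply/memP => -[u hu [h1 h2]].
  move: h1; rewrite /D'; have -> : (u == i') = false by lia.
  by move/(ui u ltac:(lia)) => eu; apply: ne; rewrite -eu.
rewrite (@patt _ D); first exact: Vchk.
  by rewrite /D'; move/eqP/negbTE: nt => ->.
move=> u hu; rewrite /D'; case: (u =P i') => [eu|]; last by move=> _ /(_ erefl).
move=> _; subst u; split => e.
  by have := ui t ht (esym e); lia.
by have := ui' t ht (esym e).
Qed.

Lemma pair_contra p r e p' h z :
  p < r -> r < e -> e < p' -> p' < N -> A p = A r -> A e = A p' -> D p = D p' ->
  (forall u, u < N -> D u = D p -> u = p \/ u = p') ->
  (forall u, u < N -> D u = D r -> u = r) ->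
  (forall u, u < N -> D u = D e -> u = e) ->
  (forall u, u < N -> D u <> z) ->
  O e = Some h -> C r = NotInSet h -> False.
Proof.
move=> pr re ep pN Apr Aep Dpp up ur ue fz Oe Cr.
have hp' := Vchk _ pN.
have R1 : (forall x, (C p' = InSet x /\ x = h) \/ (C p' = NotInSet x /\ x <> h) -> False).
  move=> x cx.
  pose D' u := if u == p' then D e else D u.
  apply: (kill D' e p'); first (apply/andP; split; lia).
  - by [].
  - by rewrite /D' eqxx; have -> : (e == p') = false by lia.
  move=> t ht; case: (t =P p') => [->|nt].
    rewrite /chk0 /chkS /D' eqxx.
    case: cx => [[-> ->]|[-> nx]].
      by apply/memP; exists e => //; split => //; have -> : (e == p') = false by lia.
    apply/memP => -[u hu [h1 h2]]; move: h1; have -> : (u == p') = false by lia.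
    by move/(ue u ltac:(lia)) => eu; subst u; apply: nx; move: h2; rewrite Oe => -[].
  rewrite (@patt _ D); first exact: Vchk.
    by rewrite /D'; move/eqP/negbTE: nt => ->.
  move=> u hu; rewrite /D'; case: (u =P p') => [eu|]; last by move=> _ /(_ erefl).
  move=> _; subst u; split => e0.
    by have := ue t ht (esym e0); lia.
  by have [] := up t ht (etrans (esym e0) (esym Dpp)); lia.
case Ep: (C p') => [x|x].
-
  have Op : O p = Some x.
    move: hp'; rewrite /chk0 /chkS Ep => /memP [u hu [h1 h2]].
    by have [eu|eu] := up u ltac:(lia) (etrans h1 (esym Dpp)); [rewrite -eu|lia].
  case: (x =P h) => [xh|nxh]; first by apply: (R1 x); left.
  pose D' u := if u == r then D p else D u.
  apply: (kill D' p r); first (apply/andP; split; lia).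
  - by [].
  - by rewrite /D' eqxx; have -> : (p == r) = false by lia.
  move=> t ht; case: (t =P r) => [->|nt].
    rewrite /chk0 /chkS Cr /D' eqxx.
    apply/memP => -[u hu [h1 h2]]; move: h1; have -> : (u == r) = false by lia.
    move/(up u ltac:(lia)) => [eu|eu]; last by lia.
    by subst u; apply: nxh; move: h2; rewrite Op => -[].
  case: (t =P p') => [et|nt'].
    subst t; rewrite /chk0 /chkS Ep.
    have -> : D' p' = D p by rewrite /D'; have -> : (p' == r) = false by lia.
    by apply/memP; exists p; [lia| rewrite /D'; have -> : (p == r) = false by lia].
  rewrite (@patt _ D); first exact: Vchk.
    by rewrite /D'; move/eqP/negbTE: nt => ->.
  move=> u hu; rewrite /D'; case: (u =P r) => [eu|]; last by move=> _ /(_ erefl).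
  move=> _; subst u; split => e0.
    by have [] := up t ht (esym e0); lia.
  by have := ur t ht (esym e0).
-
  case: (x =P h) => [xh|nxh]; last by apply: (R1 x); right.
  subst x.
  have Op : O p <> Some h.
    move=> Op; move: hp'; rewrite /chk0 /chkS Ep => /memP; apply.
    by exists p => //; lia.
  pose D' u := if u == r then D p else if u == p' then z else D u.
  apply: (kill D' p r); first (apply/andP; split; lia).
  - by [].
  - rewrite /D' eqxx; have -> : (p == r) = false by lia.
    by have -> : (p == p') = false by lia.
  move=> t ht; case: (t =P r) => [->|nt].
    rewrite /chk0 /chkS Cr /D' eqxx.
    apply/memP => -[u hu [h1 h2]]; move: h1; have -> : (u == r) = false by lia.
    have -> : (u == p') = false by lia.
    move/(up u ltac:(lia)) => [eu|eu]; last by lia.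
    by subst u; apply: Op.
  case: (t =P p') => [et|nt'].
    subst t; rewrite /chk0 /chkS Ep.
    have -> : D' p' = z by rewrite /D' ifF ?eqxx //; apply/negbTE; lia.
    apply/memP => -[u hu [h1 h2]]; move: h1; rewrite /D'.
    case: (u =P r) => [eu|nu]; first by subst u; apply: (fz p); lia.
    have -> : (u == p') = false by lia.
    by apply: fz; lia.
  rewrite (@patt _ D); first exact: Vchk.
    by rewrite /D'; move/eqP/negbTE: nt => ->; move/eqP/negbTE: nt' => ->.
  move=> u hu; rewrite /D'; case: (u =P r) => [eu|nu].
    move=> _; subst u; split => e0.
      by have [] := up t ht (esym e0); lia.
    by have := ur t ht (esym e0).
  case: (u =P p') => [eu|]; last by move=> _ /(_ erefl).
  move=> _; subst u; split => e0.
    by apply: (fz t ht).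
  by have [] := up t ht (etrans (esym e0) (esym Dpp)); lia.
Qed.

End Core.

Section Conc.
Variable k : nat.
Lemma pickle_inj (T : countType) : injective (@pickle T).
Proof. exact: pcan_inj (@pickleK T). Qed.

Definition Bk := k.+3.
Definition Nk := k.+1 * Bk.
Definition tag (b x : nat) : nat * nat * nat :=
  if (0 < x) && (x <= k.+1) && (x.-1 != b) then (minn b x.-1, maxn b x.-1, 0)
  else (b, x, 1).

Lemma tag_inj b1 x1 b2 x2 : x1 < Bk -> x2 < Bk -> tag b1 x1 = tag b2 x2 ->
  (b1 = b2 /\ x1 = x2) \/ (0 < x1 /\ 0 < x2 /\ x1.-1 = b2 /\ x2.-1 = b1 /\ x1.-1 <> b1).
Proof.
rewrite /tag /Bk => h1 h2.
case: ifP => c1; case: ifP => c2 [] *; lia.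
Qed.

Definition Ak (t : nat) : 'I_k.+1 := inord (t %/ Bk).
Definition Dk (t : nat) : data := pickle (tag (t %/ Bk) (t %% Bk)).
Definition zk : data := pickle (0, 0, 2).

Lemma Bk_gt0 : 0 < Bk. Proof. by []. Qed.

Lemma posE j x : x < Bk -> (j * Bk + x) %/ Bk = j /\ (j * Bk + x) %% Bk = x.
Proof.
move=> hx; rewrite divnMDl // modnMDl modn_small // divn_small //; split => //; lia.
Qed.

Lemma Dk_pos j x : x < Bk -> Dk (j * Bk + x) = pickle (tag j x).
Proof. by move=> hx; rewrite /Dk; have [-> ->] := posE j x hx. Qed.

Lemma Ak_pos j x : x < Bk -> Ak (j * Bk + x) = inord j.
Proof. by move=> hx; rewrite /Ak; have [-> _] := posE j x hx. Qed.

Lemma div_lt u : u < Nk -> u %/ Bk < k.+1.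
Proof. by move=> hu; rewrite ltn_divLR. Qed.

Lemma mod_lt u : u %% Bk < Bk.
Proof. exact: ltn_pmod. Qed.

Lemma Dk_eq u j x : x < Bk -> Dk u = pickle (tag j x) ->
  (u = j * Bk + x) \/
  (0 < u %% Bk /\ 0 < x /\ (u %% Bk).-1 = j /\ x.-1 = u %/ Bk /\ (u %% Bk).-1 <> u %/ Bk).
Proof.
move=> hx /pickle_inj /tag_inj; move=> /(_ (mod_lt u) hx) [[e1 e2]|h]; last by right.
by left; rewrite (divn_eq u Bk) e1 e2.
Qed.

Lemma Dk_ne_z u : Dk u <> zk.
Proof. by move/pickle_inj; rewrite /tag; case: ifP. Qed.

Lemma uniq1 j u : u < Nk -> Dk u = Dk (j * Bk) -> u = j * Bk.
Proof.
move=> hu; rewrite -[j * Bk]addn0 Dk_pos // => e.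
by case: (Dk_eq u j 0 isT e) => [->|]; [rewrite addn0|lia].
Qed.

Lemma uniq3 j u : u < Nk -> Dk u = Dk (j * Bk + k.+2) -> u = j * Bk + k.+2.
Proof.
move=> hu; rewrite Dk_pos /Bk // => e.
case: (Dk_eq u j k.+2 (ltnSn _) e) => // h.
have := div_lt u hu; lia.
Qed.

Lemma shared j1 j2 : j1 < j2 <= k ->
  Dk (j1 * Bk + j2.+1) = Dk (j2 * Bk + j1.+1) /\
  forall u, u < Nk -> Dk u = Dk (j1 * Bk + j2.+1) ->
    u = j1 * Bk + j2.+1 \/ u = j2 * Bk + j1.+1.
Proof.
move=> hj; have h1 : j2.+1 < Bk by rewrite /Bk; lia.
have h2 : j1.+1 < Bk by rewrite /Bk; lia.
split.
  rewrite !Dk_pos //; congr pickle; rewrite /tag !ifT /=; try lia.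
  by rewrite minnC maxnC.
move=> u hu; rewrite Dk_pos // => e.
case: (Dk_eq u j1 j2.+1 h1 e) => [->|[c1 [c2 [c3 [c4 c5]]]]]; first by left.
right; rewrite (divn_eq u Bk) -c4 /=.
congr (_ + _); lia.
Qed.

Lemma map_cst (T : Type) (n : nat) (s : seq T) : map (fun _ => n) s = nseq (size s) n.
Proof. by elim: s => //= ? ? ->. Qed.

Lemma blocks n : map (fun t => t %/ Bk) (iota 0 (n * Bk)) = flatten [seq nseq Bk i | i <- iota 0 n].
Proof.
elim: n => [//|n IH].
have E : map (fun t => t %/ Bk) (iota (n * Bk) Bk) = nseq Bk n.
  rewrite -[n * Bk]addn0 iotaDl -map_comp.
  transitivity (map (fun _ => n) (iota 0 Bk)); last by rewrite map_cst size_iota.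
  by apply/eq_in_map => x; rewrite mem_iota => hx /=; have [-> _] := posE n x ltac:(lia).
rewrite mulSn addnC iotaD map_cat IH add0n E -addn1 iotaD map_cat flatten_cat.
congr (_ ++ _); by rewrite add0n /= cats0.
Qed.

Lemma W_inL : inL (word Ak Dk Nk).
Proof.
split.
  move=> j; rewrite /word /mkseq filter_map -map_comp map_inj_in_uniq.
    by apply: filter_uniq; apply: iota_uniq.
  move=> u v; rewrite !mem_filter !mem_iota /= => /andP[/eqP Au hu] /andP[/eqP Av hv] e.
  have ed : u %/ Bk = v %/ Bk.
    have : val (Ak u) = val (Ak v) by rewrite Au Av.
    by rewrite /Ak /= !inordK //; apply: div_lt; lia.
  rewrite /Dk in e.
  case: (Dk_eq u (v %/ Bk) (v %% Bk) (mod_lt v) e) => [->|]; first by rewrite -divn_eq.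
  lia.
exists (fun _ => Bk).
apply: (inj_map val_inj); rewrite /word /mkseq -!map_comp map_flatten -map_comp.
transitivity (flatten [seq nseq Bk i | i <- iota 0 k.+1]).
  rewrite -blocks; apply/eq_in_map => t; rewrite mem_iota /= => ht.
  by rewrite /Ak inordK //; apply: div_lt; lia.
rewrite -val_enum_ord -map_comp enumT; congr flatten; apply: eq_map => j /=.
by rewrite map_nseq.
Qed.
End Conc.
Lemma pos_lt k j x : j <= k -> x < Bk k -> j * Bk k + x < Nk k.
Proof. rewrite /Nk /Bk => hj hx; nia. Qed.
Lemma blk_lt k j1 j2 x : j1 < j2 -> x < Bk k -> j1 * Bk k + x < j2 * Bk k.
Proof. rewrite /Bk => hj hx; nia. Qed.

Lemma nums k a b : a < b -> b <= k ->
  [/\ a * Bk k + b.+1 < a * Bk k + k.+2, a * Bk k + k.+2 < b * Bk k,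
      b * Bk k < b * Bk k + a.+1, b * Bk k + a.+1 < Nk k & a.+1 < Bk k /\ b.+1 < Bk k].
Proof. rewrite /Nk /Bk => h1 h2; split; [nia|nia|nia|nia|split; nia]. Qed.

Theorem theorem1 (k : nat) (hk : 1 <= k) (M : safa k.+1 k) :
  ~ (forall w : seq ('I_k.+1 * data), accepts M w <-> inL w).
Proof.
move=> Hiff.
pose c0 : cond k := InSet (Ordinal hk).
have [C [O [Q V]]] := acc_valid M c0 (Ak k) (Dk k) (Nk k) ((Hiff _).2 (W_inL k)).
have Hyp : forall D', accepts M (word (Ak k) D' (Nk k)) -> inL (word (Ak k) D' (Nk k)).
  by move=> D'; apply: (Hiff _).1.
have Bgt : k.+2 < Bk k by rewrite /Bk.
have blk : forall j : 'I_k.+1, exists h, O (j * Bk k) = Some h /\ C (j * Bk k + k.+2) = NotInSet h.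
  move=> j; have hj : j <= k by rewrite -ltnS.
  apply: (ins k M c0 (Nk k) (Ak k) (Dk k) C O Q V Hyp (j * Bk k) (j * Bk k + k.+2)).
  - apply/andP; split; first by rewrite -[X in X < _]addn0 ltn_add2l.
    exact: pos_lt.
  - by rewrite (Ak_pos k j k.+2) // -[j * Bk k]addn0 Ak_pos.
  - by move=> u hu; apply: uniq1.
  - by move=> u hu; apply: uniq3.
pose g (j : 'I_k.+1) : 'I_k := odflt (Ordinal hk) (O (j * Bk k)).
have gP : forall j : 'I_k.+1, O (j * Bk k) = Some (g j) /\ C (j * Bk k + k.+2) = NotInSet (g j).
  by move=> j; have [h [e1 e2]] := blk j; rewrite /g e1.
have contra : forall a b : 'I_k.+1, a < b -> g a = g b -> False.
  move=> a b ab gab.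
  have hb : b <= k by rewrite -ltnS.
  have [n1 n2 n3 n4 [n5 n6]] := nums k a b ab hb.
  have [Dsh Dup] := shared k a b ltac:(by rewrite ab hb).
  apply: (pair_contra k M c0 (Nk k) (Ak k) (Dk k) C O Q V Hyp
            (a * Bk k + b.+1) (a * Bk k + k.+2) (b * Bk k) (b * Bk k + a.+1) (g a) zk) => //.
  - by rewrite !Ak_pos.
  - by rewrite (Ak_pos k b a.+1) // -[b * Bk k]addn0 Ak_pos.
  - by move=> u hu; apply: uniq3.
  - by move=> u hu; apply: uniq1.
  - by move=> u _; apply: Dk_ne_z.
  - by rewrite gab; case: (gP b).
  - by case: (gP a).
have ginj : injective g.
  move=> a b e; apply/val_inj; case: (ltngtP a b) => // ab; exfalso.
    exact: (contra a b).
  exact: (contra b a).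
by have := leq_card g ginj; rewrite !card_ord ltnn.
Qed.
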